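(* Let $T$ be a tree of maximum degree at most $3$ and let $S$ be a set of endvertices (vertices of degree at most $1$) of $T$ such that $S$ is not an exponential dominating set of $T$, but $S$ is a subset of some minimum exponential dominating set of $T$. Root $T$ at a vertex $r\in V(T)\setminus S$. For every vertex $u$ of $T$, let $T_u$ be the subtree consisting of $u$ and all its descendants, and define $$\partial w(u)=\max\left\{2^{{\rm dist}_T(u,v)}\left(1-w_{(T_u,S\cap V(T_u))}(v)\right):v\in V(T_u)\right\}.$$ (i) If $u\neq r$ is a vertex with $\partial w(u)>1$ and $\partial w(v)\leq 1$ for every descendant $v$ of $u$, then $S\cup\{u\}$ is a subset of some minimum exponential dominating set of $T$. (ii) If $\partial w(u)\leq 1$ for every vertex $u$ of $T$, then $S\cup\{r\}$ is a minimum exponential dominating set of $T$.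
   Context: ${\rm dist}_T(u,v)$ is the usual distance in $T$. For a graph $G$, a set $S\subseteq V(G)$, and vertices $u,v$ with $u\in S$ or $v\in S$, ${\rm dist}_{(G,S)}(u,v)$ is the minimum number of edges of a path $P$ in $G$ between $u$ and $v$ such that $S$ contains exactly one endvertex of $P$ and no internal vertex of $P$, and $\infty$ if no such path exists (so ${\rm dist}_{(G,S)}(u,u)=0$ for $u\in S$). For $u\in V(G)$, $w_{(G,S)}(u)=\sum_{v\in S}(1/2)^{{\rm dist}_{(G,S)}(u,v)-1}$ with $(1/2)^{\infty}=0$. $S$ is an exponential dominating set of $G$ if $w_{(G,S)}(u)\geq 1$ for every $u\in V(G)$, and $\gamma_e(G)$ is the minimum cardinality of an exponential dominating set of $G$; an exponential dominating set of cardinality $\gamma_e(G)$ is called minimum. *)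

(* Defs.v *)
From HB Require Import structures.
From mathcomp Require Import all_boot all_order all_algebra.
Set Implicit Arguments. Unset Strict Implicit. Unset Printing Implicit Defensive.
Import Order.TTheory GRing.Theory Num.Theory.

Section ExpDom.
Variables (T : finType) (e : rel T).

Definition deg (x : T) : nat := #|[set y | e x y]|.

Definition is_tree : Prop :=
  (forall x y : T, connect e x y) /\
  (forall c : seq T, uniq c -> 3 <= size c -> ~~ cycle e c).

(* Smallest n < #|T| with P n, if any.  (All distances below are realised by
   paths/walks with fewer than #|T| edges, so this bound is harmless.) *)
Definition mindist (P : nat -> bool) : option nat :=
  let k := find P (iota 0 #|T|) in if k < #|T| then Some k else None.

Definition gdist (x y : T) : nat :=
  odflt 0 (mindist (fun n => [exists p : n.-tuple T, path e x p && (last x p == y)])).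

(* A path x :: p in the induced subgraph on V (size p edges, ending at y)
   such that S contains exactly one endvertex and no internal vertex.
   For the trivial path (p = [::], y = x) the condition is x \in S. *)
Definition spath (V S : {set T}) (x y : T) (p : seq T) : bool :=
  [&& path e x p, last x p == y, uniq (x :: p), all (mem V) (x :: p) &
   if p is [::] then x \in S
   else ((x \in S) != (y \in S)) && all (fun z => z \notin S) (take (size p).-1 p)].

(* dist_{(G,S)}(x,y) for G the subgraph induced by V; None stands for infinity. *)
Definition sdist (V S : {set T}) (x y : T) : option nat :=
  mindist (fun n => [exists p : n.-tuple T, spath V S x y p]).

Local Open Scope ring_scope.

Definition weight (V S : {set T}) (u : T) : rat :=
  \sum_(v in S) match sdist V S u v with
                | Some d => (2%:R ^-1 : rat) ^ (d%:Z - 1)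
                | None => 0
                end.

Definition eds (V S : {set T}) : bool :=
  (S \subset V) && [forall u in V, 1 <= weight V S u].

Definition min_eds (D : {set T}) : Prop :=
  eds setT D /\ (forall D' : {set T}, eds setT D' -> (#|D| <= #|D'|)%N).

(* Rooted at r: V(T_u) = u together with its descendants, i.e. the vertices v
   such that u lies on the r-v path. *)
Definition desc (r u : T) : {set T} :=
  [set v | gdist r v == (gdist r u + gdist u v)%N].

(* \partial w(u). The max is over the nonempty set V(T_u) (u is in it),
   so we seed the max with the term for v = u. *)
Definition dterm (r : T) (S : {set T}) (u v : T) : rat :=
  (2%:R ^+ gdist u v) * (1 - weight (desc r u) (S :&: desc r u) v).

Definition dw (r : T) (S : {set T}) (u : T) : rat :=
  \big[Num.max/dterm r S u u]_(v in desc r u) dterm r S u v.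

End ExpDom.

(* Main.v *)
Require Import Defs.
From HB Require Import structures.
From mathcomp Require Import all_boot all_order all_algebra.
From mathcomp Require Import zify ring lra.
Set Implicit Arguments. Unset Strict Implicit. Unset Printing Implicit Defensive.
Import Order.TTheory GRing.Theory Num.Theory.

Section Trees.
Variables (T : finType) (e : rel T).
Hypotheses (e_sym : symmetric e) (e_irr : irreflexive e)
  (Tconn : forall x y : T, connect e x y)
  (Tacyc : forall c : seq T, uniq c -> 3 <= size c -> ~~ cycle e c).

Definition upath x p y := [&& path e x p, last x p == y & uniq (x :: p)].

Lemma upath_split x p1 z p2 y : upath x (p1 ++ z :: p2) y ->
  upath x (rcons p1 z) z /\ upath z p2 y.
Proof.
case/and3P=> Hp /eqP Hl Hu.
rewrite cat_path /= in Hp; case/and3P: Hp => Hp1 Hez Hp2.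
move: Hu; rewrite -cat_cons cat_uniq => /and3P [Hu1 Hn Hu2].
split; apply/and3P; split => //.
- by rewrite -cats1 cat_path /= Hp1 Hez.
- by rewrite last_rcons.
- rewrite -cats1 -cat_cons cat_uniq Hu1 /= andbT orbF.
  by apply: contra Hn => Hz; apply/hasP; exists z => //=; rewrite inE eqxx.
- by rewrite last_cat /= in Hl; rewrite Hl.
Qed.

Lemma upath_nil x y : upath x [::] y -> y = x.
Proof. by case/and3P => _ /eqP. Qed.

Lemma upath_nil2 x q : upath x q x -> q = [::].
Proof.
case: q => [//|b q] /and3P [_ /eqP Hl Hu].
move: Hu => /= /andP [Hx _].
by move: (mem_last b q); rewrite /= in Hl; rewrite Hl (negbTE Hx).
Qed.

Lemma sym_path x p : path (fun a b => e b a) x p = path e x p.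
Proof. by apply: eq_path => a b; rewrite e_sym. Qed.

Lemma upath_uniq_n n x y p q : size p + size q <= n ->
  upath x p y -> upath x q y -> p = q.
Proof.
elim: n x y p q => [|n IH] x y p q.
  by case: p => //; case: q.
case: p => [|a p]; case: q => [|b q] //.
- move=> _ H1 H2; have E := upath_nil H1; rewrite E in H2.
  by have := upath_nil2 H2.
- move=> _ H1 H2; have E := upath_nil H2; rewrite E in H1.
  by have := upath_nil2 H1.
move=> Hs Hp Hq.
have [Eab|Nab] := eqVneq a b.
  subst b; congr cons.
  move: Hp Hq => /and3P [/= /andP [_ Hp1] Hp2 /andP [_ Hp3]]
                /and3P [/= /andP [_ Hq1] Hq2 /andP [_ Hq3]].
  apply: (IH a y) => //; first by move: Hs; rewrite /= addnS ltnS addSn => /ltnW.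
  by apply/and3P. by apply/and3P.
case: (boolP (has (fun z => (z \in b :: q) && (z != y)) (a :: p))).
  case/hasP => z Hzp /andP [Hzq Hzy].
  have [p1 [p2 Ep]] : exists p1 p2, a :: p = p1 ++ z :: p2.
    by case/splitPr: Hzp => p1 p2; exists p1, p2.
  have [q1 [q2 Eq]] : exists q1 q2, b :: q = q1 ++ z :: q2.
    by case/splitPr: Hzq => q1 q2; exists q1, q2.
  rewrite Ep in Hp; rewrite Eq in Hq.
  have [Hp1 Hp2] := upath_split Hp.
  have [Hq1 Hq2] := upath_split Hq.
  have np2 : p2 != [::] by apply: contra Hzy => /eqP E; move: Hp2; rewrite E => /upath_nil ->.
  have nq2 : q2 != [::] by apply: contra Hzy => /eqP E; move: Hq2; rewrite E => /upath_nil ->.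
  have Hhd : forall (c : T) s1 s2, head c (rcons s1 z) = head c (s1 ++ z :: s2).
    by move=> c; case.
  have E : rcons p1 z = rcons q1 z.
    apply: (IH x z) => //.
    move: Hs; rewrite Ep Eq !size_cat /= !size_rcons.
    have A1 : 0 < size (p2 : seq T) by case: (p2) np2.
    have A2 : 0 < size (q2 : seq T) by case: (q2) nq2.
    move=> A3; clear -A1 A2 A3; lia.
  have Ha := Hhd a p1 p2; have Hb := Hhd b q1 q2.
  rewrite -Ep /= E in Ha; rewrite -Eq /= in Hb.
  exfalso; move/eqP: Nab; apply; rewrite -Ha -Hb; by case: (q1).
move=> Hn.
exfalso.
move: Hp Hq => /and3P [Hp1 /eqP Hp2 Hp3] /and3P [Hq1 /eqP Hq2 Hq3].
set c := x :: (a :: p) ++ rev (belast b q).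
have Hc : cycle e c.
  rewrite /c /cycle rcons_cat cat_path Hp1 /= -rev_cons.
  rewrite [last a p]Hp2 -Hq2 -[x :: belast b q]/(belast x (b :: q)).
  rewrite rev_path.
  by rewrite sym_path.
have Hcu : uniq c.
  rewrite /c -cat_cons cat_uniq Hp3 rev_uniq /=.
  move: Hq3 => /andP [Hxq Hbq]; have {}Hbq : uniq (b :: q) := Hbq.
  have Hub : uniq (belast b q) /\ last b q \notin belast b q.
    by move: Hbq; rewrite lastI rcons_uniq => /andP [H1 H2].
  case: Hub => Hub1 Hub2; rewrite Hub1 andbT.
  apply/hasPn => z; rewrite mem_rev => Hz.
  have Hzq : z \in b :: q by apply: mem_belast Hz.
  rewrite inE negb_or; apply/andP; split.
    by apply: contraNneq Hxq => <-.
  apply/negP => Hzp; move/hasPn: Hn => /(_ z Hzp); rewrite Hzq /=.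
  move/negPn/eqP => Ez; move: Hub2; rewrite -[last b q]/(last x (b :: q)) Hq2 -Ez Hz.
  done.
have := Tacyc Hcu; rewrite Hc => H; suff: 2 < size c by move/H.
rewrite /c /= size_cat size_rev size_belast /=.
clear -Hp2 Hq2 Nab.
case: p Hp2 => [|a1 p] /=; last by rewrite addSn !ltnS.
case: q Hq2 Nab => [|b1 q] /=; last by rewrite !ltnS.
by move=> /= E1 /eqP N E2; case: N; rewrite E1 E2.
Qed.

Lemma upath_uniq x y p q : upath x p y -> upath x q y -> p = q.
Proof. exact: (@upath_uniq_n (size p + size q)). Qed.

Lemma ex_upath x y : exists p, upath x p y.
Proof.
have /connectP [p Hp ->] := Tconn x y.
case: (shortenP Hp) => p' Hp' Hu _.
by exists p'; apply/and3P.
Qed.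

Definition tp x y := xchoose (ex_upath x y).

Lemma tpP x y : upath x (tp x y) y.
Proof. exact: (xchooseP (ex_upath x y)). Qed.

Lemma tpE x y p : upath x p y -> tp x y = p.
Proof. by move=> H; apply: (upath_uniq (tpP x y) H). Qed.

Lemma tp_path x y : path e x (tp x y).
Proof. by case/and3P: (tpP x y). Qed.
Lemma tp_last x y : last x (tp x y) = y.
Proof. by case/and3P: (tpP x y) => _ /eqP. Qed.
Lemma tp_uniq x y : uniq (x :: tp x y).
Proof. by case/and3P: (tpP x y). Qed.

Lemma tp_xx x : tp x x = [::].
Proof. by apply: tpE; rewrite /upath /= eqxx. Qed.

Lemma tp_nil x y : (tp x y == [::]) = (x == y).
Proof.
apply/eqP/eqP => [E|->]; last exact: tp_xx.
by have := tp_last x y; rewrite E.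
Qed.

Lemma tp_edge x y : e x y -> tp x y = [:: y].
Proof.
move=> Hxy; apply: tpE; rewrite /upath /= Hxy eqxx /= inE andbT.
by apply: contraTneq Hxy => ->; rewrite e_irr.
Qed.

Lemma tp_rev x y : tp y x = rev (belast x (tp x y)).
Proof.
apply: tpE; have := tpP x y; move: (tp x y) => p; case/and3P => Hp /eqP Hl Hu.
apply/and3P; split.
- by rewrite -Hl rev_path sym_path.
- clear Hp Hu; case: p Hl => [|a p'] /= Hl; first by rewrite Hl.
  by rewrite rev_cons last_rcons.
- by rewrite -Hl -rev_rcons -lastI rev_uniq.
Qed.

Lemma tp_rev_seq x y : y :: tp y x = rev (x :: tp x y).
Proof. by rewrite tp_rev [x :: _]lastI rev_rcons tp_last. Qed.

Lemma mem_tp_rev x y z : (z \in y :: tp y x) = (z \in x :: tp x y).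
Proof. by rewrite tp_rev_seq mem_rev. Qed.

Lemma size_tp_rev x y : size (tp y x) = size (tp x y).
Proof. by rewrite tp_rev size_rev size_belast. Qed.

Lemma tp_cat x y z : z \in x :: tp x y -> tp x y = tp x z ++ tp z y.
Proof.
rewrite inE; case/orP => [/eqP ->|Hz]; first by rewrite tp_xx.
move: (tpP x y); case/splitPr: Hz => p1 p2 Hp.
have [H1 H2] := upath_split Hp.
by rewrite (tpE H1) (tpE H2) cat_rcons.
Qed.

Lemma size_tp_cat x y z : z \in x :: tp x y ->
  size (tp x y) = size (tp x z) + size (tp z y).
Proof. by move/tp_cat ->; rewrite size_cat. Qed.

Lemma walk_short x p : path e x p -> size (tp x (last x p)) <= size p.
Proof.
move=> Hp; case: (shortenP Hp) => p' Hp' Hu Hs.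
have -> : tp x (last x p') = p' by apply: tpE; apply/and3P.
by apply: uniq_leq_size => //; case/andP: Hu.
Qed.

Lemma walk_short_lt x p : path e x p -> ~~ uniq (x :: p) ->
  size (tp x (last x p)) < size p.
Proof.
move=> Hp Hnu; case: (shortenP Hp) => p' Hp' Hu Hs.
have -> : tp x (last x p') = p' by apply: tpE; apply/and3P.
case: (boolP (x \in p)) => Hx.
  have : size (x :: p') <= size p.
    apply: uniq_leq_size => // z; rewrite inE; case/orP => [/eqP ->|] //.
    exact: Hs.
  by [].
rewrite ltnNge; apply/negP => Hle.
move: Hnu; rewrite /= Hx /=; apply/negP/negPn.
apply: (leq_size_uniq _ Hs Hle); by case/andP: Hu.
Qed.

Lemma size_tp_lt x y : size (tp x y) < #|T|.
Proof.
have := tp_uniq x y; move/card_uniqP => /= H.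
by have := max_card (mem (x :: tp x y)); rewrite H.
Qed.


Lemma mindist_some (P : nat -> bool) n : n < #|T| -> P n ->
  (forall j, j < n -> ~~ P j) -> mindist T P = Some n.
Proof.
move=> Hn Pn Hj; rewrite /mindist.
have -> : find P (iota 0 #|T|) = n.
  rewrite -(subnKC (ltnW Hn)) iotaD find_cat.
  have -> : has P (iota 0 n) = false.
    apply/hasPn => j; rewrite mem_iota /= add0n; exact: Hj.
  rewrite size_iota add0n.
  have -> : (#|T| - n) = (#|T| - n).-1.+1 by rewrite prednK // subn_gt0.
  by rewrite /= Pn addn0.
by rewrite Hn.
Qed.

Lemma mindist_none (P : nat -> bool) : (forall j, j < #|T| -> ~~ P j) ->
  mindist T P = None.
Proof.
move=> Hj; rewrite /mindist.
have : ~~ has P (iota 0 #|T|).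
  by apply/hasPn => j; rewrite mem_iota add0n; exact: Hj.
rewrite has_find -leqNgt size_iota => H.
have := find_size P (iota 0 #|T|); rewrite size_iota => H'.
have -> : find P (iota 0 #|T|) = #|T| by apply/eqP; rewrite eqn_leq H H'.
by rewrite ltnn.
Qed.

Lemma gdistE x y : gdist e x y = size (tp x y).
Proof.
rewrite /gdist (@mindist_some _ (size (tp x y))) //.
- exact: size_tp_lt.
- apply/existsP; exists (in_tuple (tp x y)); by rewrite /= tp_path tp_last eqxx.
move=> j Hj; apply/existsP => [[p /andP [Hp /eqP Hl]]].
have := walk_short Hp; rewrite Hl size_tuple => H.
by move: (leq_ltn_trans H Hj); rewrite ltnn.
Qed.

Lemma sdistE V S x y : sdist e V S x y =
  if spath e V S x y (tp x y) then Some (size (tp x y)) else None.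
Proof.
rewrite /sdist.
have Heq : forall n (p : n.-tuple T), spath e V S x y p -> tval p = tp x y.
  move=> n p /and5P [H1 H2 H3 _ _]; symmetry; apply: tpE; exact/and3P.
case: ifP => Hs.
  apply: mindist_some; first exact: size_tp_lt.
    by apply/existsP; exists (in_tuple (tp x y)).
  move=> j Hj; apply/existsP => [[p Hp]].
  have := Heq _ _ Hp => E; have := size_tuple p; rewrite E => E'.
  by move: Hj; rewrite E' ltnn.
apply: mindist_none => j _; apply/existsP => [[p Hp]].
by have := Heq _ _ Hp => E; move: Hp; rewrite E Hs.
Qed.


Lemma mem_take_tp x y z :
  (z \in take (size (tp x y)).-1 (tp x y)) = (z \in tp x y) && (z != y).
Proof.
have := tp_uniq x y; have := tp_last x y.
case/lastP: (tp x y) => [|p w] //.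
rewrite last_rcons size_rcons /= -cats1 take_size_cat // => -> /andP [_].
rewrite cat_uniq /= andbT orbF => /andP [_ Hw].
rewrite mem_cat inE; case: (eqVneq z y) => [->|]; last by rewrite orbF andbT.
by rewrite (negbTE Hw).
Qed.

Definition valid (V S : {set T}) x y := spath e V S x y (tp x y).

Lemma validE V S x y : valid V S x y =
  [&& all (mem V) (x :: tp x y),
      if x == y then x \in S else (x \in S) != (y \in S) &
      all (fun z => (z == y) || (z \notin S)) (tp x y)].
Proof.
rewrite /valid /spath tp_path tp_last tp_uniq eqxx /=.
case: (eqVneq x y) => [<-|nxy]; first by rewrite tp_xx /= !andbT.
have Hall : all (fun z => z \notin S) (take (size (tp x y)).-1 (tp x y)) =
            all (fun z => (z == y) || (z \notin S)) (tp x y).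
  apply/allP/allP => H z Hz.
    case: (eqVneq z y) => //= Hzy; apply: H; by rewrite mem_take_tp Hz.
  move: Hz; rewrite mem_take_tp => /andP [Hz Hzy].
  by move: (H z Hz); rewrite (negbTE Hzy).
rewrite -Hall.
have : tp x y != [::] by rewrite tp_nil.
by case: (tp x y).
Qed.

Lemma valid_V V S x y z : valid V S x y -> z \in x :: tp x y -> z \in V.
Proof. by rewrite validE => /and3P [/allP H _ _] /H. Qed.

Lemma valid_inner V S x y z : valid V S x y -> z \in tp x y -> z != y -> z \notin S.
Proof.
rewrite validE => /and3P [_ _ /allP H] Hz Hzy.
by move: (H z Hz); rewrite (negbTE Hzy).
Qed.

Lemma valid_neq V S x y : valid V S x y -> x != y -> (x \in S) != (y \in S).
Proof. by rewrite validE => /and3P [_ H _] Hxy; rewrite (negbTE Hxy) in H. Qed.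

Lemma valid_xx V S x : valid V S x x = (x \in V) && (x \in S).
Proof. by rewrite validE tp_xx eqxx /= !andbT. Qed.

Lemma validI (V S : {set T}) x y : x != y ->
  (forall z, z \in x :: tp x y -> z \in V) -> (x \in S) != (y \in S) ->
  (forall z, z \in tp x y -> z != y -> z \notin S) -> valid V S x y.
Proof.
move=> Hxy HV HS Hin; rewrite validE (negbTE Hxy) HS.
apply/and3P; split => //; apply/allP => z Hz; first exact: HV.
by case: (eqVneq z y) => //= Hzy; apply: Hin.
Qed.

Local Open Scope ring_scope.

Definition hh (n : nat) : rat := (2%:R ^-1) ^+ n.

Lemma hh_ge0 n : 0 <= hh n.
Proof. by rewrite /hh exprn_ge0 // invr_ge0. Qed.

Lemma hh_gt0 n : 0 < hh n.
Proof. by rewrite /hh exprn_gt0 // invr_gt0. Qed.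

Lemma hhD m n : hh (m + n) = hh m * hh n.
Proof. by rewrite /hh exprD. Qed.

Lemma hh1 : hh 1 = 2%:R^-1.
Proof. by rewrite /hh expr1. Qed.

Lemma pwE (d : nat) : (2%:R ^-1 : rat) ^ (d%:Z - 1) = 2 * hh d.
Proof.
by rewrite expfzDr ?invr_eq0 ?pnatr_eq0 // mulrC; congr (_ * _).
Qed.

Definition term (V S : {set T}) u v : rat := if valid V S u v then 2 * hh (size (tp u v)) else 0.

Lemma term_ge0 V S u v : 0 <= term V S u v.
Proof. by rewrite /term; case: ifP => // _; rewrite mulr_ge0 ?hh_ge0. Qed.

Lemma weightE V S u : weight e V S u = \sum_(v in S) term V S u v.
Proof.
apply: eq_bigr => v _; rewrite sdistE /term /valid.
by case: ifP => // _; rewrite pwE.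
Qed.


Local Close Scope ring_scope.

Lemma prefix_upath x p q y : upath x (p ++ q) y -> upath x p (last x p).
Proof.
case/and3P; rewrite cat_path -cat_cons cat_uniq => /andP [H1 _] _ /and3P [H2 _ _].
by apply/and3P.
Qed.

Lemma tp_prefix x y p q : tp x y = p ++ q -> tp x (last x p) = p.
Proof. move=> E; apply: tpE; apply: (@prefix_upath _ _ q y); rewrite -E; exact: tpP. Qed.

Lemma memc (a : T) s z : z \in s -> z \in a :: s.
Proof. by rewrite inE => ->; rewrite orbT. Qed.

Definition pre x y := last x (belast x (tp x y)).

Lemma tp_rcons x y : x != y -> tp x y = rcons (tp x (pre x y)) y.
Proof.
move=> Hxy; rewrite /pre.
have : tp x y != [::] by rewrite tp_nil.
have := tp_last x y; have := tpP x y.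
case/lastP: (tp x y) => [//|q w] Hu; rewrite last_rcons => Ew _.
subst w; rewrite belast_rcons /=.
have -> : tp x (last x q) = q.
  by apply: (@tp_prefix _ y _ [:: y]); rewrite cats1 (tpE Hu).
by [].
Qed.

Lemma pre_edge x y : x != y -> e (pre x y) y.
Proof.
move=> Hxy; have := tp_path x y; rewrite (tp_rcons Hxy) rcons_path tp_last.
by case/andP.
Qed.

Lemma pre_mem x y : pre x y \in x :: tp x y.
Proof.
case: (eqVneq x y) => [<-|Hxy]; first by rewrite /pre tp_xx inE eqxx.
rewrite (tp_rcons Hxy) -cats1 -cat_cons mem_cat; apply/orP; left.
by rewrite -{1}(tp_last x (pre x y)) mem_last.
Qed.

Lemma pre_neq x y : x != y -> pre x y != y.
Proof. by move=> Hxy; apply/negP => /eqP E; have := pre_edge Hxy; rewrite E e_irr. Qed.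

Lemma head_rev x y : x != y -> ohead (tp y x) = Some (pre x y).
Proof.
move=> Hxy; rewrite tp_rev (tp_rcons Hxy) belast_rcons.
by rewrite lastI rev_rcons tp_last.
Qed.

Lemma last_mem x y : y \in x :: tp x y.
Proof. by rewrite -{1}(tp_last x y) mem_last. Qed.

Lemma ohead_mem (s : seq T) c : ohead s = Some c -> c \in s.
Proof. by case: s => //= a s [->]; rewrite inE eqxx. Qed.

Lemma ohead_cat (s1 s2 : seq T) : s1 != [::] -> ohead (s1 ++ s2) = ohead s1.
Proof. by case: s1. Qed.

Lemma tp_edge_cons x y c : ohead (tp x y) = Some c -> e x c /\ tp x y = c :: tp c y.
Proof.
move=> H; have Hc := ohead_mem H.
have Hxc : e x c by have := tp_path x y; case: (tp x y) H => //= a s [->] /andP [].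
split=> //; rewrite (tp_cat (memc _ Hc)) (tp_edge Hxc); done.
Qed.

Lemma tp_disj x y z : z \in tp x y -> forall w, w \in x :: tp x z -> w \in tp z y -> False.
Proof.
move=> Hz w Hw1 Hw2; have := tp_uniq x y.
rewrite (tp_cat (memc _ Hz)) -cat_cons cat_uniq => /and3P [_ /hasP H _].
by apply: H; exists w.
Qed.

Section Rooted.
Variable r : T.

Lemma in_desc u v : (v \in desc e r u) = (u \in r :: tp r v).
Proof.
rewrite /desc inE !gdistE; apply/eqP/idP => [H|H]; last exact: size_tp_cat.
have Hw : path e r (tp r u ++ tp u v) by rewrite cat_path tp_path tp_last tp_path.
have Hl : last r (tp r u ++ tp u v) = v by rewrite last_cat tp_last tp_last.
case: (boolP (uniq (r :: tp r u ++ tp u v))) => Hu.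
  have -> : tp r v = tp r u ++ tp u v by apply: tpE; apply/and3P; rewrite Hl eqxx.
  by rewrite -cat_cons mem_cat last_mem.
have := walk_short_lt Hw Hu; rewrite Hl H size_cat ltnn //.
Qed.

Lemma desc_self u : u \in desc e r u.
Proof. by rewrite in_desc last_mem. Qed.

Lemma desc_root v : v \in desc e r r.
Proof. by rewrite in_desc inE eqxx. Qed.

Lemma desc_cat u v : v \in desc e r u -> tp r v = tp r u ++ tp u v.
Proof. by rewrite in_desc => /tp_cat. Qed.

Lemma desc_disj u v z : v \in desc e r u -> z \in r :: tp r u -> z \in tp u v -> False.
Proof.
move=> /desc_cat Hv Hz1 Hz2; have := tp_uniq r v.
by rewrite Hv -cat_cons cat_uniq => /and3P [_ /hasP H _]; apply: H; exists z.
Qed.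

Lemma desc_sub u v z : v \in desc e r u -> z \in u :: tp u v -> z \in desc e r u.
Proof.
move=> Hv; rewrite inE; case/orP => [/eqP ->|Hz]; first exact: desc_self.
have E := desc_cat Hv; rewrite (tp_cat (memc _ Hz)) catA in E.
have := tp_prefix E; rewrite last_cat tp_last tp_last => E'.
by rewrite in_desc E' -cat_cons mem_cat last_mem.
Qed.

Lemma par_out u : u != r -> pre r u \notin desc e r u.
Proof.
move=> Hu; have Hru : r != u by rewrite eq_sym.
rewrite in_desc; have := tp_uniq r u; rewrite (tp_rcons Hru) -rcons_cons rcons_uniq.
by case/andP.
Qed.

Lemma par_mem u : pre r u \in r :: tp r u.
Proof. exact: pre_mem. Qed.

Lemma out_head u y : u != r -> y \notin desc e r u -> ohead (tp u y) = Some (pre r u).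
Proof.
move=> Hu Hy; have Hru : r != u by rewrite eq_sym.
have Hyu : u != y by apply: contraNneq Hy => <-; exact: desc_self.
have Hw : path e r (tp r u ++ tp u y) by rewrite cat_path tp_path tp_last tp_path.
have Hl : last r (tp r u ++ tp u y) = y by rewrite last_cat tp_last tp_last.
case: (boolP (uniq (r :: tp r u ++ tp u y))) => Hun.
  have E : tp r y = tp r u ++ tp u y by apply: tpE; apply/and3P; rewrite Hl eqxx.
  by move: Hy; rewrite in_desc E -cat_cons mem_cat last_mem.
move: Hun; rewrite -cat_cons cat_uniq tp_uniq /=.
have := tp_uniq u y; rewrite /= => /andP [Huy ->]; rewrite andbT negbK.
case/hasP => z Hz1 Hz2.
have Hzu : z != u by apply: contraNneq Huy => E; rewrite -{1}E.
have E1 : ohead (tp u y) = ohead (tp u z).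
  by rewrite (tp_cat (memc _ Hz1)) ohead_cat // tp_nil eq_sym.
rewrite E1 (head_rev Hzu); congr Some.
have E2 := tp_cat Hz2; rewrite (tp_rcons Hru) (tp_rcons Hzu) -rcons_cat in E2.
have {}E2 : tp r (pre r u) = tp r z ++ tp z (pre z u) by case: (rcons_inj E2).
by rewrite -(tp_last r (pre r u)) E2 last_cat tp_last tp_last.
Qed.

Lemma out_all u y z : u != r -> y \notin desc e r u -> z \in tp u y -> z \notin desc e r u.
Proof.
move=> Hu Hy Hz; apply/negP => Hzd.
have Hzu : z != u by apply: contraTneq Hz => ->; have := tp_uniq u y; case/andP.
have E1 : ohead (tp u z) = Some (pre r u).
  by rewrite -(out_head Hu Hy) (tp_cat (memc _ Hz)) ohead_cat // tp_nil eq_sym.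
exact: (desc_disj Hzd (par_mem u) (ohead_mem E1)).
Qed.

Lemma desc_all u v z : v \in desc e r u -> z \in u :: tp u v -> z \in desc e r u.
Proof. exact: desc_sub. Qed.

Lemma cross u x s : x \notin desc e r u -> s \in desc e r u -> u \in tp x s.
Proof.
move=> Hx Hs.
have Hu : u != r by apply: contraNneq Hx => ->; exact: desc_root.
have Hxu : x != u by apply: contraNneq Hx => ->; exact: desc_self.
have Hw : path e x (tp x u ++ tp u s) by rewrite cat_path tp_path tp_last tp_path.
have Hl : last x (tp x u ++ tp u s) = s by rewrite last_cat tp_last tp_last.
have Hun : uniq (x :: tp x u ++ tp u s).
  rewrite -cat_cons cat_uniq tp_uniq /=.
  have := tp_uniq u s; rewrite /= => /andP [Hus ->]; rewrite andbT.
  apply/hasPn => z Hz; rewrite -mem_tp_rev inE; apply/negP; case/orP => [/eqP Ez|Hz2].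
    by move: Hz; rewrite Ez (negbTE Hus).
  have := out_all Hu Hx Hz2; rewrite (desc_sub Hs (memc _ Hz)) //.
have E : tp x s = tp x u ++ tp u s by apply: tpE; apply/and3P; rewrite Hl eqxx.
rewrite E mem_cat; apply/orP; left.
by move: (last_mem x u); rewrite inE eq_sym (negbTE Hxu).
Qed.

Lemma avoid u x y z : x \notin desc e r u -> y \notin desc e r u ->
  z \in x :: tp x y -> z \notin desc e r u.
Proof.
move=> Hx Hy Hz; apply/negP => Hzd.
have Hu : u != r by apply: contraNneq Hx => ->; exact: desc_root.
have Hzx : z \in tp x y by move: Hz; rewrite inE; case/orP => // /eqP E; move: Hx; rewrite -E Hzd.
have Hu1 : u \in tp x z := cross Hx Hzd.
have Hu2 : u \in tp x y by rewrite (tp_cat (memc _ Hzx)) mem_cat Hu1.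
have Hxu : x != u by apply: contraNneq Hx => ->; exact: desc_self.
have Hp1 : pre x u \in x :: tp x u by apply: pre_mem.
have Hp2 : pre x u \in tp u y.
  have := head_rev Hxu; rewrite (out_head Hu Hx) => -[<-].
  exact: (ohead_mem (out_head Hu Hy)).
exact: (tp_disj Hu2 Hp1 Hp2).
Qed.

Lemma convex u a b z : a \in desc e r u -> b \in desc e r u ->
  z \in a :: tp a b -> z \in desc e r u.
Proof.
move=> Ha Hb Hz; apply/negPn/negP => Hzd.
have Hza : z \in tp a b by move: Hz; rewrite inE; case/orP => // /eqP E; move: Hzd; rewrite E Ha.
have Hu1 : u \in tp z a := cross Hzd Ha.
have Hu2 : u \in tp z b := cross Hzd Hb.
have Hu1' : u \in a :: tp a z by rewrite -mem_tp_rev memc.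
exact: (tp_disj Hza Hu1' Hu2).
Qed.

Lemma child u v : v \in desc e r u -> v != u -> exists c,
  [/\ e u c, c \in desc e r u, c != u, v \in desc e r c & tp u v = c :: tp c v].
Proof.
move=> Hv Hvu.
have : tp u v != [::] by rewrite tp_nil eq_sym.
case E: (tp u v) => [//|c s] _.
have Hh : ohead (tp u v) = Some c by rewrite E.
have [Huc Ec] := tp_edge_cons Hh.
exists c; split => //.
- by apply: (desc_sub Hv); rewrite E inE mem_head orbT.
- by apply: contraTneq Huc => ->; rewrite e_irr.
- rewrite in_desc (desc_cat Hv) E -cat_cons mem_cat mem_head orbT //.
by rewrite -E.
Qed.

Lemma child_out u c : e u c -> c \in desc e r u -> c != u -> u \notin desc e r c.
Proof.
move=> Huc Hc Hcu; rewrite in_desc; apply/negP => H.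
have := tp_uniq r c; rewrite (desc_cat Hc) (tp_edge Huc) -cat_cons cat_uniq.
by case/and3P => _ /hasP H2 _; apply: H2; exists c; rewrite ?mem_head.
Qed.

Lemma child_sub u c v : e u c -> c \in desc e r u -> c != u -> v \in desc e r c ->
  v \in desc e r u.
Proof.
move=> Huc Hc Hcu Hv; rewrite in_desc (desc_cat Hv) (desc_cat Hc).
by rewrite -catA -cat_cons mem_cat last_mem.
Qed.

End Rooted.


Local Open Scope ring_scope.

Lemma sum_sub (P Q : pred T) (F : T -> rat) : (forall i, P i -> Q i) ->
  (forall i, Q i -> 0 <= F i) -> \sum_(i | P i) F i <= \sum_(i | Q i) F i.
Proof.
move=> HPQ HF; rewrite [X in _ <= X](bigID P) /=.
have -> : \sum_(i | Q i && P i) F i = \sum_(i | P i) F i.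
  by apply: eq_bigl => i; case: (boolP (P i)) => H; rewrite ?andbT ?andbF ?HPQ.
rewrite lerDl; apply: sumr_ge0 => i /andP [Hi _]; exact: HF.
Qed.

Hypothesis Tdeg : forall x : T, (deg e x <= 3)%N.

Definition Bset q c : {set T} := [set y | ohead (tp q y) == Some c].
Definition okd (D : {set T}) q y : bool :=
  (y \in D) && all (fun z => (z == y) || (z \notin D)) (tp q y).
Definition Fk (D : {set T}) q c : rat :=
  \sum_(y | (y \in Bset q c) && okd D q y) hh (size (tp q y)).

Lemma hhS n : hh n.+1 = 2%:R^-1 * hh n.
Proof. by rewrite -add1n hhD hh1. Qed.


Lemma Fk_le D : forall q c, e q c -> Fk D q c <= 2%:R^-1.
Proof.
suff H : forall n q c, (#|Bset q c| < n)%N -> e q c -> Fk D q c <= 2%:R^-1.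
  by move=> q c; apply: H (ltnSn _).
elim=> [//|n IH] q c Hn Hqc.
have Hqc' : q != c by apply: contraTneq Hqc => ->; rewrite e_irr.
have HBc : c \in Bset q c by rewrite inE (tp_edge Hqc).
case: (boolP (c \in D)) => HcD.
  rewrite /Fk (eq_bigl (fun y => y == c)); first by rewrite big_pred1_eq (tp_edge Hqc) hh1.
  move=> y; apply/andP/eqP => [[Hy /andP [HyD /allP Hall]]|->].
    move: Hy; rewrite inE => /eqP Hh.
    by move: (Hall c (ohead_mem Hh)); rewrite HcD orbF => /eqP.
  by rewrite HBc /okd (tp_edge Hqc) HcD /= eqxx.
pose N := [set z | e c z] :\ q.
pose hd y := odflt q (ohead (tp c y)).
have Hfil : forall y, (y \in Bset q c) && okd D q y ->
    [/\ y != c, tp q y = c :: tp c y, ohead (tp c y) = Some (hd y) & hd y \in N].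
  move=> y /andP [Hy /andP [HyD _]].
  have Hyc : y != c by apply: contraNneq HcD => <-.
  move: Hy; rewrite inE => /eqP Hh.
  have [_ Ey] := tp_edge_cons Hh.
  have : tp c y != [::] by rewrite tp_nil eq_sym.
  case Ec: (tp c y) => [//|c' s] _.
  have Hh' : ohead (tp c y) = Some c' by rewrite Ec.
  have [Hcc' _] := tp_edge_cons Hh'.
  split => //; first by rewrite Ey Ec.
    by rewrite /hd Ec.
  rewrite /hd Ec /= /N !inE Hcc' andbT.
  apply: contraTneq (tp_uniq q y) => E; rewrite Ey Ec E /= !inE eqxx /=.
  by rewrite orbT.
rewrite /Fk (partition_big hd (fun c' => c' \in N)); last first.
  by move=> y /Hfil [].
apply: (@le_trans _ _ (\sum_(c' in N) (2%:R^-1 * 2%:R^-1 : rat))).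
  apply: ler_sum => c' Hc'.
  have Hcc' : e c c' by move: Hc'; rewrite !inE => /andP [].
  have Hc'q : c' != q by move: Hc'; rewrite !inE => /andP [].
  have Hcq : e c q by rewrite e_sym.
  have Hsub : Bset c c' \subset Bset q c.
    apply/subsetP => y; rewrite !inE => /eqP Hh.
    have Hq : q \notin tp c y.
      apply/negP => Hq; move: Hh; rewrite (tp_cat (memc _ Hq)) (tp_edge Hcq) /=.
      by move=> [E]; move: Hc'q; rewrite E eqxx.
    have -> : tp q y = c :: tp c y.
      apply: tpE; apply/and3P; split.
      - by rewrite /= Hqc tp_path.
      - by rewrite /= tp_last.
      - by rewrite cons_uniq tp_uniq andbT inE negb_or Hqc' Hq.
    by [].
  have Hprop : Bset c c' \proper Bset q c.
    apply/properP; split => //; exists c => //; by rewrite inE tp_xx.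
  have HF := IH c c' (leq_trans (proper_card Hprop) Hn) Hcc'.
  apply: (@le_trans _ _ (2%:R^-1 * Fk D c c')); last first.
    by rewrite ler_pM2l ?invr_gt0 // ltr0n.
  rewrite /Fk big_distrr /=.
  apply: (@le_trans _ _ (\sum_(y | ((y \in Bset q c) && okd D q y) && (hd y == c'))
                            2%:R^-1 * hh (size (tp c y)))).
    apply: ler_sum => y /andP [/Hfil [_ -> _ _] _]; by rewrite /= hhS.
  apply: sum_sub => [y /andP [Hy /eqP Hhd]|y _]; last by rewrite mulr_ge0 ?hh_ge0 // invr_ge0.
  have [Hyc Ey Hh _] := Hfil y Hy.
  move: Hy => /andP [_ /andP [HyD /allP Hall]].
  apply/andP; split; first by rewrite inE Hh Hhd.
  apply/andP; split => //; apply/allP => z Hz; apply: Hall.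
  by rewrite Ey inE Hz orbT.
have HN : (#|N| <= 2)%N.
  have := Tdeg c; rewrite /deg (cardsD1 q) inE e_sym Hqc.
  by rewrite add1n ltnS.
rewrite sumr_const.
case: #|N| HN => [|[|[|k]]] // _; rewrite ?mulr0n ?mulr1n ?mulr2n; lra.
Qed.


Lemma inner_deg x y z : z \in tp x y -> z != y -> (2 <= deg e z)%N.
Proof.
move=> Hz Hzy.
have : tp z y != [::] by rewrite tp_nil.
case E: (tp z y) => [//|w s] _.
have Hh : ohead (tp z y) = Some w by rewrite E.
have [Hzw _] := tp_edge_cons Hh.
have Hxz : x != z by apply: contraTneq Hz => ->; have := tp_uniq z y; case/andP.
have Hpz := pre_edge Hxz.
have Hpw : pre x z != w.
  apply/negP => /eqP Epw; apply: (tp_disj Hz (pre_mem x z)).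
  by rewrite Epw E mem_head.
rewrite /deg; apply: (@leq_trans #|[set pre x z; w]|).
  by rewrite cards2 Hpw.
apply: subset_leq_card; apply/subsetP => a; rewrite !inE => /orP [] /eqP ->.
  by rewrite e_sym.
by [].
Qed.

Lemma valid_sym_mem x y z : (z \in x :: tp x y) = (z \in y :: tp y x).
Proof. by rewrite mem_tp_rev. Qed.

Lemma term_self (D : {set T}) x : x \in D -> 1 <= weight e setT D x.
Proof.
move=> Hx; rewrite weightE (bigD1 x) //=.
have -> : term setT D x x = 2.
  by rewrite /term valid_xx inE Hx tp_xx /hh expr0 mulr1.
rewrite -[1]addr0 lerD //.
by apply: sumr_ge0 => i _; exact: term_ge0.
Qed.

Lemma term_le V D x y : term V D x y <= 2 * hh (size (tp x y)).
Proof. rewrite /term; case: ifP => // _; by rewrite mulr_ge0 ?hh_ge0. Qed.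

Lemma hh_inv (d : nat) : (2%:R ^+ d : rat) * hh d = 1.
Proof. by rewrite /hh exprVn mulfV // expf_neq0 // pnatr_eq0. Qed.

Lemma dterm_le (a w : rat) (d : nat) : (2%:R ^+ d : rat) * (1 - w) <= 1 -> 1 - w <= hh d.
Proof.
move=> H; have Hp : (0 : rat) < 2%:R ^+ d by rewrite exprn_gt0 // ltr0n.
rewrite -(ler_pM2l Hp) hh_inv //.
Qed.

Section Rooted2.
Variables (r : T) (S : {set T}).
Hypothesis S_end : forall x, x \in S -> (deg e x <= 1)%N.

Lemma inner_notS x y z : z \in tp x y -> z != y -> z \notin S.
Proof.
move=> Hz Hzy; apply/negP => /S_end H; have := inner_deg Hz Hzy.
by rewrite leqNgt ltnS H.
Qed.

Lemma dw_ge c v : v \in desc e r c -> dterm e r S c v <= dw e r S c.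
Proof. by move=> Hv; rewrite /dw; apply: le_bigmax_cond. Qed.

Lemma inside u (D' : {set T}) :
  (forall z, z \in desc e r u -> (z \in D') = (z \in S) || (z == u)) ->
  (forall c, c \in desc e r u -> c != u -> dw e r S c <= 1) ->
  forall v, v \in desc e r u -> 1 <= weight e setT D' v.
Proof.
move=> HD Hdw v Hv.
case: (boolP (v \in D')) => HvD; first exact: term_self.
have HuD : u \in D' by rewrite HD ?desc_self // eqxx orbT.
have Hvu : v != u by apply: contraNneq HvD => ->.
have [c [Huc Hc Hcu Hvc Etp]] := child Hv Hvu.
pose wc := weight e (desc e r c) (S :&: desc e r c) v.
have H1 : 1 - wc <= hh (size (tp c v)).
  apply: (@dterm_le 0); have := le_trans (dw_ge Hvc) (Hdw c Hc Hcu).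
  by rewrite /dterm gdistE.
have Htu : term setT D' v u = hh (size (tp c v)).
  rewrite /term ifT; last first.
    apply: validI; [done | by move=> z _; rewrite in_setT | by rewrite (negbTE HvD) HuD | ].
    move=> z Hz Hzu; have Hz' : z \in desc e r u.
      by apply: (desc_sub Hv); rewrite -mem_tp_rev memc.
    by rewrite HD // negb_or (inner_notS Hz Hzu) Hzu.
  by rewrite size_tp_rev Etp /= hhS mulrA mulfV ?mul1r // pnatr_eq0.
have Hsum : wc <= \sum_(s in D' | s != u) term setT D' v s.
  rewrite /wc weightE.
  apply: (@le_trans _ _ (\sum_(s in S :&: desc e r c) term setT D' v s)).
    apply: ler_sum => s; rewrite inE => /andP [HsS Hsc].
    rewrite {1}/term; case: ifP => Hval; last exact: term_ge0.
    have HsD : s \in D'.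
      by rewrite HD ?HsS // (child_sub Huc Hc Hcu Hsc).
    have Hvs : v != s by apply: contraNneq HvD => ->.
    rewrite /term ifT //.
    apply: validI; [done | by move=> z _; rewrite in_setT | by rewrite (negbTE HvD) HsD | ].
    move=> z Hz Hzs.
    have Hzc : z \in desc e r c by apply: (valid_V Hval); rewrite memc.
    have HzS : z \notin S.
      by have := valid_inner Hval Hz Hzs; rewrite inE Hzc andbT.
    have Hzu : z != u.
      by apply: contraTneq Hzc => ->; apply: child_out.
    by rewrite HD ?(child_sub Huc Hc Hcu Hzc) // negb_or HzS.
  apply: sum_sub => [s|s _]; last exact: term_ge0.
  rewrite inE => /andP [HsS Hsc].
  have Hsu : s \in desc e r u := child_sub Huc Hc Hcu Hsc.
  rewrite HD // HsS /=.
  by apply: contraTneq Hsc => ->; apply: child_out.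
rewrite weightE (bigD1 u) //= Htu.
apply: (@le_trans _ _ (hh (size (tp c v)) + wc)); first by lra.
by rewrite lerD2l.
Qed.


Lemma w_self_ge2 (V : {set T}) (S' : {set T}) v : v \in V -> v \in S' -> 2 <= weight e V S' v.
Proof.
move=> HV HS; rewrite weightE (bigD1 v) //=.
have -> : term V S' v v = 2 by rewrite /term valid_xx HV HS tp_xx /hh expr0 mulr1.
by rewrite lerDl; apply: sumr_ge0 => i _; exact: term_ge0.
Qed.

Lemma necessity u (D : {set T}) : u != r -> eds e setT D -> S \subset D ->
  (forall z, z \in desc e r u -> z \in D -> z \in S) -> dw e r S u <= 1.
Proof.
move=> Hur /andP [_ /forallP HD] HSD HDS.
have Hdt : forall v, v \in desc e r u -> dterm e r S u v <= 1.
  move=> v Hv; rewrite /dterm gdistE.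
  set wu := weight e (desc e r u) (S :&: desc e r u) v.
  have Hp : (0 : rat) < 2%:R ^+ size (tp u v) by rewrite exprn_gt0 // ltr0n.
  case: (boolP (v \in S)) => HvS.
    have : 2 <= wu by apply: w_self_ge2; rewrite // inE HvS.
    move=> H2; apply: (@le_trans _ _ 0); last by [].
    by apply: mulr_ge0_le0; [exact: ltW Hp | lra].
  have HvD : v \notin D by apply: contra HvS; apply: HDS.
  have Hw1 : 1 <= weight e setT D v by have := HD v; rewrite in_setT.
  suff : weight e setT D v <= wu + hh (size (tp u v)).
    move=> H; rewrite -[X in _ <= X](hh_inv (size (tp u v))) ler_pM2l //; lra.
  rewrite weightE (bigID (fun s => s \in desc e r u)) /=.
  apply: lerD.
    apply: (@le_trans _ _ (\sum_(s in S :&: desc e r u) term setT D v s)).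
      apply: sum_sub => [s /andP [Hs1 Hs2]|s _]; last exact: term_ge0.
      by rewrite inE Hs2 andbT; apply: HDS.
    rewrite /wu weightE; apply: ler_sum => s; rewrite inE => /andP [HsS Hsu].
    rewrite {1}/term; case: ifP => Hval; last exact: term_ge0.
    have HsD : s \in D by apply: (subsetP HSD).
    have Hvs : v != s by apply: contraNneq HvD => ->.
    rewrite /term ifT //.
    apply: validI; [done | | | ].
    - by move=> z Hz; apply: (convex Hv Hsu Hz).
    - by rewrite !in_setI (negbTE HvS) HsS Hsu.
    - move=> z Hz Hzs; rewrite in_setI.
      apply/negP => /andP [HzS _]; move: (valid_inner Hval Hz Hzs).
      by rewrite (subsetP HSD _ HzS).
  set p := pre r u; set d := size (tp u v).
  have Hru : r != u by rewrite eq_sym.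
  have Hup : e u p by rewrite e_sym; apply: pre_edge.
  apply: (@le_trans _ _ (\sum_(s | (s \in D) && (s \notin desc e r u))
     (if (s \in Bset u p) && okd D u s then 2 * hh d * hh (size (tp u s)) else 0))).
    apply: ler_sum => s /andP [HsD Hsu].
    rewrite {1}/term; case: ifP => Hval; last by case: ifP => // _; rewrite !mulr_ge0 ?hh_ge0.
    have Hus : u \in v :: tp v s by rewrite -mem_tp_rev; apply: memc; exact: cross Hsu Hv.
    have Ecat := tp_cat Hus.
    rewrite ifT.
      by rewrite Ecat size_cat hhD size_tp_rev mulrA.
    apply/andP; split; first by rewrite inE (out_head Hur Hsu).
    apply/andP; split => //; apply/allP => z Hz.
    case: (eqVneq z s) => //= Hzs.
    by apply: (valid_inner Hval) => //; rewrite Ecat mem_cat Hz orbT.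
  rewrite -big_mkcondr /=.
  apply: (@le_trans _ _ (\sum_(s | (s \in Bset u p) && okd D u s) 2 * hh d * hh (size (tp u s)))).
    apply: sum_sub => [s /andP [_ ->] //|s _]; by rewrite !mulr_ge0 ?hh_ge0.
  rewrite -big_distrr /= -/(Fk D u p).
  have := Fk_le D Hup; have := hh_ge0 d; nra.
have Hs : dterm e r S u u <= 1 by apply: Hdt; exact: desc_self.
by apply/bigmax_leP; split => // v Hv; apply: Hdt.
Qed.


Lemma valid_ext (V D1 D2 : {set T}) x y :
  (forall z, z \in x :: tp x y -> (z \in D1) = (z \in D2)) ->
  valid V D1 x y = valid V D2 x y.
Proof.
move=> H; rewrite !validE (H x (mem_head _ _)) (H y (last_mem x y)).
congr [&& _, _ & _]; apply: eq_in_all => z Hz; by rewrite H // memc.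
Qed.

Lemma outside u (D : {set T}) : u != r -> eds e setT D -> forall x, x \notin desc e r u ->
  1 <= weight e setT ((D :\: desc e r u) :|: ((S :&: desc e r u) :|: [set u])) x.
Proof.
move=> Hur /andP [_ /forallP HD] x Hx.
set D' := (D :\: desc e r u) :|: ((S :&: desc e r u) :|: [set u]).
have Huu : u \in desc e r u := desc_self r u.
have HD'o : forall z, z \notin desc e r u -> (z \in D') = (z \in D).
  move=> z Hz; rewrite !in_setU in_setD in_setI in_set1 (negbTE Hz) /= andbF /=.
  have -> : (z == u) = false by apply/negP => /eqP E; move: Hz; rewrite E Huu.
  by rewrite orbF.
have HuD' : u \in D' by rewrite !in_setU in_set1 eqxx !orbT.
case: (boolP (x \in D)) => HxD.
  by apply: term_self; rewrite HD'o.
have HxD' : x \notin D' by rewrite HD'o.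
have Hxu : x != u by apply: contraNneq Hx => ->.
have Hw : 1 <= weight e setT D x by have := HD x; rewrite in_setT.
have Hin : forall z, z \in tp x u -> z != u -> z \notin desc e r u.
  move=> z Hz Hzu; have : z \in u :: tp u x by rewrite mem_tp_rev memc.
  rewrite inE (negbTE Hzu) /= => Hz'; exact: (out_all Hur Hx Hz').
rewrite weightE (bigID (fun s => s \in desc e r u)) /= in Hw.
rewrite weightE (bigID (fun s => s \in desc e r u)) /=.
apply: (le_trans Hw); apply: lerD; last first.
  rewrite [X in _ <= X](eq_bigl (fun s => (s \in D) && (s \notin desc e r u))); last first.
    by move=> s; case: (boolP (s \in desc e r u)) => Hs; rewrite ?andbF ?andbT ?HD'o.
  apply: ler_sum => s /andP [_ Hs]; rewrite /term (@valid_ext _ D D') //.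
  by move=> z Hz; rewrite HD'o // (avoid Hx Hs Hz).
apply: (@le_trans _ _ (term setT D' x u)); last first.
  rewrite (bigD1 u) /=; last by rewrite HuD' Huu.
  by rewrite lerDl; apply: sumr_ge0 => i _; exact: term_ge0.
case: (boolP (valid setT D' x u)) => HvalU; last first.
  rewrite big1 ?term_ge0 // => s /andP [HsD Hsu].
  rewrite /term ifF //; apply/negP => Hval; move/negP: HvalU; apply.
  have Ecat : tp x s = tp x u ++ tp u s by apply: tp_cat; apply: memc; exact: cross Hx Hsu.
  apply: validI; [done | by move=> z _; rewrite in_setT | by rewrite (negbTE HxD') HuD' | ].
  move=> z Hz Hzu; have Hzo := Hin z Hz Hzu.
  rewrite HD'o //; apply: (valid_inner Hval); first by rewrite Ecat mem_cat Hz.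
  by apply: contraNneq Hzo => ->.
have Hinn : forall z, z \in tp x u -> z != u -> z \notin D.
  move=> z Hz Hzu; rewrite -HD'o ?(Hin z Hz Hzu) //; exact: valid_inner HvalU Hz Hzu.
rewrite {2}/term HvalU; set d := size (tp x u).
case: (boolP (u \in D)) => HuD.
  apply: (@le_trans _ _ (\sum_(s | (s \in D) && (s \in desc e r u)) (if s == u then 2 * hh d else 0))).
    apply: ler_sum => s /andP [HsD Hsu]; case: (eqVneq s u) => [->|Hsu']; first exact: term_le.
    rewrite /term ifF //; apply/negP => Hval.
    have Hu1 : u \in tp x s := cross Hx Hsu.
    have Hus : u != s by rewrite eq_sym.
    by move: (valid_inner Hval Hu1 Hus); rewrite HuD.
  rewrite -big_mkcondr /= (eq_bigl (fun s => s == u)) ?big_pred1_eq //.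
  by move=> s; case: (eqVneq s u) => [->|]; rewrite ?HuD ?Huu ?andbF.
pose N := [set z | e u z] :\ pre r u.
pose hd s := odflt u (ohead (tp u s)).
apply: (@le_trans _ _ (\sum_(s | (s \in D) && (s \in desc e r u))
   (if okd D u s then 2 * hh d * hh (size (tp u s)) else 0))).
  apply: ler_sum => s /andP [HsD Hsu].
  rewrite {1}/term; case: ifP => Hval; last by case: ifP => // _; rewrite !mulr_ge0 ?hh_ge0.
  have Ecat : tp x s = tp x u ++ tp u s by apply: tp_cat; apply: memc; exact: cross Hx Hsu.
  rewrite ifT; first by rewrite Ecat size_cat hhD mulrA.
  apply/andP; split => //; apply/allP => z Hz; case: (eqVneq z s) => //= Hzs.
  by apply: (valid_inner Hval) => //; rewrite Ecat mem_cat Hz orbT.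
rewrite -big_mkcondr /=.
have Hfil : forall s, ((s \in D) && (s \in desc e r u)) && okd D u s ->
   ohead (tp u s) = Some (hd s) /\ hd s \in N.
  move=> s /andP [/andP [HsD Hsu] _].
  have Hsu' : s != u by apply: contraNneq HuD => <-.
  have [c [Huc Hc Hcu _ Et]] := child Hsu Hsu'.
  rewrite /hd Et /=; split => //.
  rewrite /N in_setD1 inE Huc andbT.
  by apply: contraTneq Hc => ->; exact: par_out.
rewrite (partition_big hd (fun c => c \in N)); last by move=> s /Hfil [].
apply: (@le_trans _ _ (\sum_(c in N) (2 * hh d * 2%:R^-1))).
  apply: ler_sum => c Hc.
  have Huc : e u c by move: Hc; rewrite in_setD1 inE => /andP [].
  apply: (@le_trans _ _ (2 * hh d * Fk D u c)); last first.
    by rewrite ler_pM2l ?(Fk_le D Huc) // mulr_gt0 ?hh_gt0.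
  rewrite /Fk big_distrr /=.
  apply: sum_sub => [s /andP [Hs /eqP Hh]|s _]; last by rewrite !mulr_ge0 ?hh_ge0.
  have [Ho _] := Hfil s Hs; apply/andP; split; first by rewrite inE Ho Hh.
  by case/andP: Hs.
have E2 : 2 * hh d * 2%:R^-1 = hh d by rewrite mulrAC mulfV ?mul1r // pnatr_eq0.
rewrite E2 sumr_const.
have Hpu : e u (pre r u) by rewrite e_sym; apply: pre_edge; rewrite eq_sym.
have HN : (#|N| <= 2)%N.
  by have := Tdeg u; rewrite /deg (cardsD1 (pre r u)) inE Hpu add1n ltnS.
have := hh_ge0 d.
case: #|N| HN => [|[|[|k]]] // _; rewrite ?mulr0n ?mulr1n ?mulr2n; lra.
Qed.

End Rooted2.

Lemma main (S : {set T}) (S_end : forall x, x \in S -> (deg e x <= 1)%N)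
  (S_not : ~~ eds e setT S)
  (S_sub : exists D : {set T}, min_eds e D /\ S \subset D)
  (r : T) (r_notS : r \notin S) :
  (forall u : T, u != r -> 1 < dw e r S u ->
     (forall v : T, v \in desc e r u -> v != u -> dw e r S v <= 1) ->
     exists D : {set T}, min_eds e D /\ (u |: S) \subset D)
  /\
  ((forall u : T, dw e r S u <= 1) -> min_eds e (r |: S)).
Proof.
have [D [[HDeds HDmin] HSD]] := S_sub.
split.
  move=> u Hur Hdw Hdesc.
  have [z [Hz1 Hz2 Hz3]] : exists z, [/\ z \in desc e r u, z \in D & z \notin S].
    case: (boolP [exists z, [&& z \in desc e r u, z \in D & z \notin S]]).
      by case/existsP => z /and3P [H1 H2 H3]; exists z.
    move=> Hn; exfalso; move: Hdw; rewrite ltNge; move/negP; apply.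
    apply: (necessity Hur HDeds HSD) => z H1 H2.
    apply/negPn/negP => H3; move/negP: Hn; apply; apply/existsP; exists z.
    by rewrite H1 H2 H3.
  set D' := (D :\: desc e r u) :|: ((S :&: desc e r u) :|: [set u]).
  have HD'in : forall z, z \in desc e r u -> (z \in D') = (z \in S) || (z == u).
    by move=> z0 Hz0; rewrite !in_setU in_setD in_setI in_set1 Hz0 /= andbT.
  have HD'eds : eds e setT D'.
    apply/andP; split; first exact: subsetT.
    apply/forallP => x; apply/implyP => _.
    case: (boolP (x \in desc e r u)) => Hx.
      by apply: (inside S_end HD'in) => // c Hc Hcu; apply: Hdesc.
    exact: (outside S Hur HDeds Hx).
  have Hcard : (#|D'| <= #|D|)%N.
    have H1 := cardsUI (D :\: desc e r u) ((S :&: desc e r u) :|: [set u]).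
    have H2 := cardsUI (S :&: desc e r u) [set u].
    have H3 := cardsID (desc e r u) D.
    have H4 : (#|S :&: desc e r u| < #|D :&: desc e r u|)%N.
      apply: proper_card; apply/properP; split.
        by apply/subsetP => y; rewrite !in_setI => /andP [Hy1 Hy2]; rewrite Hy2 (subsetP HSD).
      by exists z; rewrite !in_setI ?Hz1 ?Hz2 ?(negbTE Hz3).
    rewrite cards1 in H2.
    rewrite /D'; lia.
  exists D'; split; first split => //.
    by move=> D'' HD''; apply: leq_trans Hcard (HDmin D'' HD'').
  apply/subsetP => y; rewrite in_setU1; case/orP => [/eqP ->|HyS].
    by rewrite !in_setU in_set1 eqxx !orbT.
  case: (boolP (y \in desc e r u)) => Hy; first by rewrite HD'in // HyS.
  by rewrite !in_setU in_setD Hy (subsetP HSD).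
move=> Hall.
have HD'eds : eds e setT (r |: S).
  apply/andP; split; first exact: subsetT.
  apply/forallP => x; apply/implyP => _.
  apply: (@inside r S S_end r) => //; last exact: desc_root.
  by move=> z _; rewrite in_setU1 orbC.
split => // D'' HD''; apply: leq_trans (HDmin D'' HD'').
rewrite cardsU1 r_notS add1n.
apply: proper_card; rewrite properEneq HSD andbT.
by apply: contraNneq S_not => ->.
Qed.

End Trees.

Local Open Scope ring_scope.

Theorem lemma3 (T : finType) (e : rel T)
  (e_sym : symmetric e) (e_irr : irreflexive e) (Ttree : is_tree e)
  (Tdeg : forall x : T, (deg e x <= 3)%N)
  (S : {set T}) (S_end : forall x, x \in S -> (deg e x <= 1)%N)
  (S_not : ~~ eds e setT S)
  (S_sub : exists D : {set T}, min_eds e D /\ S \subset D)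
  (r : T) (r_notS : r \notin S) :
  (forall u : T, u != r -> 1 < dw e r S u ->
     (forall v : T, v \in desc e r u -> v != u -> dw e r S v <= 1) ->
     exists D : {set T}, min_eds e D /\ (u |: S) \subset D)
  /\
  ((forall u : T, dw e r S u <= 1) -> min_eds e (r |: S)).
Proof.
case: Ttree => Tconn Tacyc.
exact: (main e_sym e_irr Tconn Tacyc Tdeg S_end S_not S_sub r_notS).
Qed.
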